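(* Let $k\ge 2$, $l,m\ge 1$, and let $\Gamma=K_{1,k-1}[K_l,K_m,\dots,K_m]$ (with $K_l$ replacing the center of the star and $K_m$ replacing each of the $k-1$ leaves), so $\Gamma$ has $n=l+(k-1)m$ vertices. Let $d_1=n-1$, $d_2=l+m-1$, and \[y_{1,2}=\tfrac12\Big[(l-1)d_1\sqrt2+(m-1)d_2\sqrt2\pm\sqrt{\big[(l-1)d_1\sqrt2-(m-1)d_2\sqrt2\big]^2+4lm(k-1)(d_1^2+d_2^2)}\Big].\] Then the Sombor spectrum of $\Gamma$ (eigenvalues of its Sombor matrix with multiplicities) consists of $-(n-1)\sqrt2$ with multiplicity $l-1$, $-(l+m-1)\sqrt2$ with multiplicity $mk-k-m+1$, $(m-1)(l+m-1)\sqrt2$ with multiplicity $k-2$, and $y_1$, $y_2$ each with multiplicity $1$ (multiplicities adding up when values coincide).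
   Context: All graphs are finite, simple and undirected. For a graph $\Gamma$ with vertices $u_1,\dots,u_N$, the Sombor matrix $S(\Gamma)$ is the $N\times N$ matrix whose $(i,j)$ entry is $\sqrt{\deg(u_i)^2+\deg(u_j)^2}$ if $u_i$ and $u_j$ are adjacent and $0$ otherwise; its eigenvalues with multiplicities form the Sombor spectrum. $K_r$ is the complete graph on $r$ vertices and $K_{1,k-1}$ is the star with center $u_1$ and leaves $u_2,\dots,u_k$. For a graph $H$ with vertices $u_1,\dots,u_k$ and pairwise disjoint graphs $\Gamma_1,\dots,\Gamma_k$, the generalized join $H[\Gamma_1,\dots,\Gamma_k]$ is obtained by replacing each $u_i$ by $\Gamma_i$ and joining every vertex of $\Gamma_i$ to every vertex of $\Gamma_j$ whenever $u_i$ is adjacent to $u_j$ in $H$. *)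

(* Defs.v *)
From HB Require Import structures.
From mathcomp Require Import all_boot all_order all_algebra.
From mathcomp Require Import reals.
Set Implicit Arguments. Unset Strict Implicit. Unset Printing Implicit Defensive.
Import Order.TTheory GRing.Theory Num.Theory.
Local Open Scope ring_scope.

(* A finite simple graph on a finite vertex type T is given by its
   adjacency relation (assumed symmetric and irreflexive where needed). *)

Definition deg (T : finType) (e : rel T) (x : T) : nat := #|[pred y | e x y]|.

Definition sombor_mx (R : rcfType) (T : finType) (e : rel T) : 'M[R]_#|T| :=
  \matrix_(i, j) (let x := enum_val i in let y := enum_val j in
     if e x y then Num.sqrt (((deg e x)%:R) ^+ 2 + ((deg e y)%:R) ^+ 2) else 0).

Definition complete_rel (r : nat) : rel 'I_r := fun a b => a != b.

Definition star_rel (k : nat) : rel 'I_k :=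
  fun i j => (i != j) && ((val i == 0%N) || (val j == 0%N)).

Definition gjoin_rel (k : nat) (H : rel 'I_k) (s : 'I_k -> nat)
  (G : forall i, rel 'I_(s i)) : rel {i : 'I_k & 'I_(s i)} :=
  fun x y => if tag x == tag y then G (tag x) (tagged x) (tagged_as x y)
             else H (tag x) (tag y).

Definition star_sizes (k l m : nat) : 'I_k -> nat :=
  fun i => if val i == 0%N then l else m.

Definition star_join_rel (k l m : nat) :=
  @gjoin_rel k (@star_rel k) (@star_sizes k l m)
    (fun i => @complete_rel (@star_sizes k l m i)).

(* Main.v *)
Require Import Defs.
From HB Require Import structures.
From mathcomp Require Import all_boot all_order all_algebra.
From mathcomp Require Import reals.
From mathcomp Require Import zify ring lra.
Import Order.TTheory GRing.Theory Num.Theory.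
Local Open Scope ring_scope.
Set Implicit Arguments. Unset Strict Implicit.

Lemma sylv (F : comNzRingType) n r (U : 'M[F]_(n, r)) (V : 'M[F]_(r, n)) :
  \det (1%:M - U *m V) = \det (1%:M - V *m U).
Proof.
have E1 : block_mx 1%:M U V 1%:M =
   block_mx 1%:M 0 V 1%:M *m block_mx 1%:M U 0 (1%:M - V *m U).
  by rewrite mulmx_block !mul1mx !mul0mx !mulmx1 !addr0 addrC subrK.
have E2 : block_mx 1%:M U V 1%:M =
   block_mx (1%:M - U *m V) U 0 1%:M *m block_mx 1%:M 0 V 1%:M.
  by rewrite mulmx_block !mul1mx !mul0mx !mulmx1 ?mulmx0 ?addr0 ?add0r subrK.
have := congr1 determinant E1; rewrite {}E2 !det_mulmx !det_lblock !det_ublock.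
by rewrite !det1 !mul1r !mulr1.
Qed.

Lemma det_lowrank (F : fieldType) n r (M : 'M[F]_n) (U : 'M[F]_(n, r))
  (V : 'M[F]_(r, n)) (Q : 'M[F]_r) :
  M \in unitmx -> U = M *m U *m Q ->
  \det (M - U *m V) = \det M * \det (1%:M - V *m (U *m Q)).
Proof.
move=> Mu EU.
have -> : M - U *m V = M *m (1%:M - (U *m Q) *m V).
  by rewrite mulmxBr mulmx1 !mulmxA -EU.
by rewrite det_mulmx sylv.
Qed.

Lemma poly_eq_from (R : realDomainType) (p q : {poly R}) (c : R) :
  (forall x, c < x -> p.[x] = q.[x]) -> p = q.
Proof.
move=> H; apply/eqP; rewrite -subr_eq0; apply/eqP.
apply: (@roots_geq_poly_eq0 _ _ [seq c + 1 + i%:R | i <- iota 0 (size (p - q))]).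
- apply/allP => y /mapP [i _ ->]; rewrite /root hornerD hornerN H ?subrr //.
  by rewrite -addrA ltrDl ltr_pwDl.
- rewrite map_inj_uniq ?iota_uniq // => i j /addrI /eqP; rewrite eqr_nat => /eqP //.
- by rewrite size_map size_iota.
Qed.

Lemma horner_char (R : comNzRingType) n (A : 'M[R]_n) x :
  (char_poly A).[x] = \det (x%:M - A).
Proof.
rewrite /char_poly -horner_evalE -det_map_mx /char_poly_mx; congr (\det _).
apply/matrixP => i j; rewrite !mxE /horner_eval /=.
by rewrite horner_evalE hornerD hornerN hornerMn hornerX hornerC.
Qed.

Lemma det2 (R : comNzRingType) (A : 'M[R]_2) : \det A = A 0 0 * A 1 1 - A 0 1 * A 1 0.
Proof.
rewrite (expand_det_row _ 0) !big_ord_recl big_ord0 /cofactor !det_mx11 !mxE /=.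
rewrite addr0.
have -> : lift (0 : 'I_2) (0 : 'I_1) = 1 by apply/val_inj.
have -> : lift (1 : 'I_2) (0 : 'I_1) = 0 by apply/val_inj.
rewrite /= expr0 expr1 mul1r. have -> : (ord0 : 'I_2) = 0 by []. ring.
Qed.

Section Comb.
Variables (k1 l m : nat).
Hypotheses (hl : (1 <= l)%N) (hm : (1 <= m)%N).
Local Notation k := k1.+1.
Local Notation s := (@star_sizes k l m).
Local Notation T := {i : 'I_k & 'I_(s i)}.
Local Notation e := (@star_join_rel k l m).

Lemma sig_big (R : Type) (idx : R) (op : Monoid.com_law idx) (G : T -> R) :
  \big[op/idx]_(z : T) G z = \big[op/idx]_(i : 'I_k) \big[op/idx]_(j : 'I_(s i)) G (Tagged _ j).
Proof.
symmetry; rewrite (sig_big_dep _ _ (fun i (j : 'I_(s i)) => G (Tagged _ j))) /=.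
by apply: eq_bigr => -[i j].
Qed.

Lemma sizes0 : s ord0 = l. Proof. by []. Qed.
Lemma sizesN i : i != ord0 -> s i = m.
Proof. by move=> Hi; rewrite /star_sizes ifF //; apply: contraNF Hi => /eqP H; apply/eqP/val_inj. Qed.

Lemma card_neq0 : #|[pred j : 'I_k | j != ord0]| = k1.
Proof. by have := cardC1 (@ord0 k1); rewrite card_ord. Qed.

Lemma deg_val (y : T) :
  deg e y = if tag y == ord0 then (l + k1 * m - 1)%N else (l + m - 1)%N.
Proof.
case: y => i a /=; rewrite /deg -sum1_card big_mkcond /= sig_big (bigD1 i) //=.
rewrite [X in (X + _)%N](_ : _ = (s i - 1)%N); last first.
  rewrite -big_mkcond /= (eq_bigl (predC1 a)) ?sum1_card ?cardC1 ?card_ord ?subn1 //.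
  move=> b; rewrite !inE /star_join_rel /gjoin_rel /= eqxx tagged_asE.
  by rewrite /complete_rel eq_sym.
rewrite [X in (_ + X)%N](_ : _ = \sum_(j < k | j != i) (@star_rel k i j) * s j)%N; last first.
  apply: eq_bigr => j ji; rewrite -big_mkcond /=.
  rewrite (eq_bigl (fun _ => @star_rel k i j)); last first.
    by move=> b; rewrite !inE /star_join_rel /gjoin_rel /= eq_sym (negbTE ji).
  case: (star_rel i j); first by rewrite mul1n sum1_card card_ord.
  by rewrite mul0n big_pred0.
have [-> | Hi] := eqVneq i ord0.
  rewrite sizes0 (eq_bigr (fun _ => m)); last first.
    by move=> j Hj; rewrite /star_rel eq_sym Hj /= sizesN // mul1n.
  rewrite big_mkcond /= big_ord_recl /= add0n.
  rewrite (eq_bigr (fun _ => m)) ?sum_nat_const ?card_ord; first by lia.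
  by [].
rewrite sizesN // (bigD1 ord0) ?(eq_sym ord0) //= big1 ?addn0.
  have -> : star_rel i ord0 = true by rewrite /star_rel Hi eqxx orbT.
  by rewrite mul1n sizes0; lia.
move=> j /andP [Hj1 Hj2]; rewrite /star_rel.
have -> : (val i == 0%N) = false by apply/negbTE.
have -> : (val j == 0%N) = false by apply/negbTE.
by rewrite orbF andbF.
Qed.

Definition tg (p : 'I_#|{: T}|) : 'I_k := tag (enum_val p).

Lemma big_t (R : Type) (idx : R) (op : Monoid.com_law idx) (F : 'I_k -> R) :
  \big[op/idx]_(p : 'I_#|{: T}|) F (tg p) = \big[op/idx]_(i : 'I_k) \big[op/idx]_(j : 'I_(s i)) F i.
Proof.
rewrite /tg -(big_enum_val (fun y : T => F (tag y))) /=.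
by rewrite -(sig_big op (fun y : T => F (tag y))); apply: eq_bigl => y; rewrite inE.
Qed.

Lemma star_relE (i j : 'I_k) : star_rel i j = (i != j) && ((i == ord0) || (j == ord0)).
Proof. by []. Qed.

Section Real.
Variable R : realType.
Definition d1 : R := (l + k1 * m - 1)%N%:R.
Definition d2 : R := (l + m - 1)%N%:R.
Definition s2 : R := Num.sqrt 2.
Definition cc : R := Num.sqrt (d1 ^+ 2 + d2 ^+ 2).
Definition dd (i : 'I_k) : R := if i == ord0 then d1 else d2.
Definition ww (i j : 'I_k) : R :=
  if i == j then dd i * s2 else if star_rel i j then cc else 0.

Lemma sqrt_dd (d : R) : 0 <= d -> Num.sqrt (d ^+ 2 + d ^+ 2) = d * s2.
Proof.
move=> d0; rewrite -mulr2n -mulr_natl sqrtrM ?ler0n // sqrtr_sqr ger0_norm //.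
by rewrite mulrC.
Qed.

Lemma sombor_entry (p q : 'I_#|{: T}|) :
  sombor_mx R e p q = ww (tg p) (tg q) - (p == q)%:R * (dd (tg p) * s2).
Proof.
rewrite /sombor_mx mxE -(inj_eq enum_val_inj) /tg.
move: (enum_val p) (enum_val q) => [i a] [j b] /=.
rewrite !deg_val /= /star_join_rel /gjoin_rel /= /ww.
have Edd : forall i0 : 'I_k, ((if i0 == ord0 then (l + k1 * m - 1)%N else (l + m - 1)%N)%:R : R) = dd i0.
  by move=> i0; rewrite /dd; case: ifP.
rewrite !Edd.
have [Eij | Nij] := eqVneq i j.
  subst j; rewrite tagged_asE eq_Tagged /= /complete_rel.
  case Hab: (a == b) => /=; first by rewrite mul1r subrr.
  rewrite mul0r subr0 sqrt_dd // /dd; case: ifP => _; exact: ler0n.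
have -> : (Tagged (fun i0 => 'I_(s i0)) a == Tagged (fun i0 => 'I_(s i0)) b) = false.
  by apply/negbTE; apply: contraNneq Nij => /eqP H; apply/eqP; exact: (eq_tag H).
rewrite (_ : (false%:R : R) = 0) // mul0r subr0; case: ifP => // /[dup] St.
rewrite star_relE Nij /= => /orP [/eqP Ei | /eqP Ej].
  by subst i; rewrite /dd eqxx ifF //; apply/negbTE; rewrite eq_sym.
by subst j; rewrite /dd eqxx ifF 1?addrC //; apply/negbTE.
Qed.

Lemma sum_delta (j : 'I_k) (G : 'I_k -> R) : \sum_i (j == i)%:R * G i = G j.
Proof.
rewrite (bigD1 j) //= eqxx mul1r big1 ?addr0 // => i /negbTE.
by rewrite eq_sym => ->; rewrite mul0r.
Qed.

Lemma ww_eq i j : ww i j = (i != ord0)%:R * (d2 * s2) * (j == i)%:R +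
  ((i == ord0)%:R * (d1 * s2 * (j == ord0)%:R + cc * (j != ord0)%:R) +
   (i != ord0)%:R * (cc * (j == ord0)%:R)).
Proof.
rewrite /ww star_relE /dd.
have [Ei|Hi] := eqVneq i ord0; have [Ej|Hj] := eqVneq j ord0.
- by subst i j; rewrite !eqxx /= !(mul0r, mulr0, mul1r, mulr1, addr0, add0r).
- by subst i; rewrite eq_sym (negbTE Hj) /= !(mul0r, mulr0, mul1r, mulr1, addr0, add0r).
- by subst j; rewrite (negbTE Hi) eq_sym (negbTE Hi) /= !(mul0r, mulr0, mul1r, mulr1, addr0, add0r).
have [Eij|Hij] := eqVneq i j.
  by subst j; rewrite ?eqxx ?(negbTE Hi) /= !(mul0r, mulr0, mul1r, mulr1, addr0, add0r).
by rewrite ?(eq_sym j) ?(negbTE Hij) ?(negbTE Hi) ?(negbTE Hj) /= !(mul0r, mulr0, mul1r, mulr1, addr0, add0r).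
Qed.

Definition Um : 'M[R]_(#|{:T}|, k) := \matrix_(p, i) ((tg p == i)%:R).
Definition V1 : 'M[R]_(k, #|{:T}|) :=
  \matrix_(i, q) ((i != ord0)%:R * (d2 * s2) * (tg q == i)%:R).
Definition U2 : 'M[R]_(#|{:T}|, 2) :=
  \matrix_(p, a) (if a == 0 then (tg p == ord0)%:R else (tg p != ord0)%:R).
Definition V2 : 'M[R]_(2, #|{:T}|) :=
  \matrix_(a, q) (if a == 0 then d1 * s2 * (tg q == ord0)%:R + cc * (tg q != ord0)%:R
                  else cc * (tg q == ord0)%:R).
Definition Dl : 'M[R]_#|{:T}| := diag_mx (\row_p (dd (tg p) * s2)).

Lemma sombor_dec : sombor_mx R e = Um *m V1 + U2 *m V2 - Dl.
Proof.
apply/matrixP => p q; rewrite sombor_entry !mxE.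
under eq_bigr do rewrite !mxE.
rewrite sum_delta !big_ord_recl big_ord0 !mxE /= addr0 ww_eq.
congr (_ - _); exact: mulr_natl.
Qed.

Lemma sum_t (F : 'I_k -> R) : \sum_p F (tg p) = \sum_i (s i)%:R * F i.
Proof.
rewrite (big_t _ F); apply: eq_bigr => i _.
by rewrite sumr_const card_ord mulr_natl.
Qed.

Lemma sum_t_delta i (G : 'I_k -> R) :
  \sum_p (tg p == i)%:R * G (tg p) = (s i)%:R * G i.
Proof.
rewrite (sum_t (fun t => (t == i)%:R * G t)) (bigD1 i) //= eqxx mul1r big1 ?addr0 //.
by move=> j /negbTE ->; rewrite mul0r mulr0.
Qed.

Lemma sum_tb (F : bool -> R) :
  \sum_p F (tg p == ord0) = l%:R * F true + (k1 * m)%:R * F false.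
Proof.
rewrite (sum_t (fun t => F (t == ord0))) big_ord_recl eqxx sizes0; congr (_ + _).
rewrite (eq_bigr (fun _ => m%:R * F false)) ?sumr_const ?card_ord.
  by rewrite -[_ *+ k1]mulr_natl natrM; ring.
move=> i _; rewrite sizesN ?(negbTE (neq_lift ord0 i)) //.
Qed.

Definition bb : R := (m - 1)%N%:R * d2 * s2.

Lemma s2_ge0 : 0 <= s2. Proof. exact: sqrtr_ge0. Qed.
Lemma d1_ge0 : 0 <= d1. Proof. exact: ler0n. Qed.
Lemma d2_ge0 : 0 <= d2. Proof. exact: ler0n. Qed.
Lemma dd_ge0 i : 0 <= dd i. Proof. by rewrite /dd; case: ifP => _; apply: ler0n. Qed.
Lemma bb_ge0 : 0 <= bb.
Proof. by rewrite /bb !mulr_ge0 ?ler0n ?s2_ge0. Qed.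

Section Eval.
Variable x : R.
Hypothesis hx : bb < x.

Definition q (i : 'I_k) : R := x + dd i * s2.
Lemma x_gt0 : 0 < x. Proof. exact: le_lt_trans bb_ge0 hx. Qed.
Lemma q_gt0 i : 0 < q i.
Proof. by rewrite /q ltr_pwDl ?x_gt0 // mulr_ge0 ?dd_ge0 ?s2_ge0. Qed.
Lemma q_neq0 i : q i != 0. Proof. by rewrite gt_eqF ?q_gt0. Qed.

Definition M0 : 'M[R]_#|{:T}| := diag_mx (\row_p q (tg p)).
Definition Q1 : 'M[R]_k := diag_mx (\row_i (q i)^-1).

Lemma M0E : x%:M - sombor_mx R e = M0 - Um *m V1 - U2 *m V2.
Proof.
rewrite sombor_dec; apply/matrixP => p r; rewrite !mxE /q.
by case: (p == r); rewrite /= ?mulr1n ?mulr0n; ring.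
Qed.

Lemma detM0 : \det M0 = q ord0 ^+ l * (x + d2 * s2) ^+ (k1 * m).
Proof.
rewrite det_diag; under eq_bigr do rewrite mxE.
rewrite (big_t _ q) big_ord_recl sizes0 prodr_const card_ord; congr (_ * _).
rewrite (eq_bigr (fun _ => (x + d2 * s2) ^+ m)).
  by rewrite prodr_const card_ord -exprM mulnC.
move=> i _; have Hi : lift ord0 i != ord0 by rewrite eq_sym neq_lift.
by rewrite sizesN // prodr_const card_ord /q /dd (negbTE Hi).
Qed.

Lemma M0_unit : M0 \in unitmx.
Proof.
rewrite unitmxE detM0 unitfE mulf_neq0 // expf_neq0 //; first exact: q_neq0.
by rewrite gt_eqF // ltr_pwDl ?x_gt0 // mulr_ge0 ?d2_ge0 ?s2_ge0.
Qed.

Lemma M0_Um : Um = M0 *m Um *m Q1.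
Proof.
apply/matrixP => p i; rewrite mul_diag_mx mul_mx_diag !mxE.
case: eqP => [<-|_]; last by rewrite !mulr0 mul0r.
by rewrite mulr1 mulfV ?q_neq0.
Qed.

Lemma det1_diag n (r : 'rV[R]_n) : \det (1%:M - diag_mx r) = \prod_i (1 - r 0 i).
Proof.
have -> : 1%:M - diag_mx r = diag_mx (\row_i (1 - r 0 i)).
  apply/matrixP => i j; rewrite !mxE; case: (i == j); rewrite /= ?mulr1n ?mulr0n //.
  by rewrite subr0.
by rewrite det_diag; apply: eq_bigr => i _; rewrite mxE.
Qed.

Definition q1 : R := x + d2 * s2.

Lemma detM1 : \det (M0 - Um *m V1) =
  q ord0 ^+ l * q1 ^+ (k1 * m) * (1 - d2 * s2 * m%:R / q1) ^+ k1.
Proof.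
rewrite (det_lowrank _ M0_unit M0_Um) detM0.
have -> : V1 *m (Um *m Q1) =
    diag_mx (\row_i ((i != ord0)%:R * (d2 * s2) * (s i)%:R / q i)).
  apply/matrixP => i j; rewrite mul_mx_diag !mxE.
  under eq_bigr do rewrite !mxE.
  pose G := fun t : 'I_k => (i != ord0)%:R * (d2 * s2) * ((t == j)%:R * (q j)^-1).
  rewrite (eq_bigr (fun p => (tg p == i)%:R * G (tg p))); last by move=> p _; rewrite /G; ring.
  rewrite sum_t_delta /G; case: (eqVneq i j) => [<-|Hij] /=; rewrite ?mulr1n ?mulr0n; ring.
rewrite det1_diag big_ord_recl !mxE eqxx /= !mul0r subr0 mul1r.
rewrite (eq_bigr (fun _ => 1 - d2 * s2 * m%:R / q1)); first by rewrite prodr_const card_ord.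
move=> i _; have Hi : lift ord0 i != ord0 by rewrite eq_sym neq_lift.
by rewrite !mxE Hi sizesN // /q /q1 /dd (negbTE Hi) mul1r.
Qed.

Lemma mE : (m%:R : R) = (m - 1)%N%:R + 1.
Proof. by rewrite natrB // subrK. Qed.

Lemma xbb_gt0 : 0 < x - bb. Proof. by rewrite subr_gt0. Qed.
Lemma xbb_neq0 : x - bb != 0. Proof. by rewrite gt_eqF ?xbb_gt0. Qed.
Lemma q1_gt0 : 0 < q1.
Proof. by rewrite /q1 ltr_pwDl ?x_gt0 // mulr_ge0 ?d2_ge0 ?s2_ge0. Qed.

Lemma one_minus : 1 - d2 * s2 * m%:R / q1 = (x - bb) / q1.
Proof.
have h := q1_gt0; rewrite /q1 /bb mE in h *.
by field; rewrite gt_eqF.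
Qed.

Definition M1 := M0 - Um *m V1.

Lemma M1_unit : M1 \in unitmx.
Proof.
rewrite unitmxE detM1 unitfE one_minus !mulf_neq0 // expf_neq0 //.
- exact: q_neq0.
- by rewrite gt_eqF ?q1_gt0.
- by rewrite mulf_neq0 ?xbb_neq0 // invr_neq0 // gt_eqF ?q1_gt0.
Qed.

Definition gg (a : 'I_2) : R := if a == 0 then (q ord0)^-1 else (x - bb)^-1.
Definition Q2 : 'M[R]_2 := diag_mx (\row_a gg a).

Lemma V1U2 : V1 *m U2 = \matrix_(i, a) ((i != ord0)%:R * (d2 * s2) * (s i)%:R *
   (if a == 0 then (i == ord0)%:R else (i != ord0)%:R)).
Proof.
apply/matrixP => i a; rewrite !mxE.
under eq_bigr do rewrite !mxE.
pose G := fun t : 'I_k => (i != ord0)%:R * (d2 * s2) *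
   (if a == 0 then (t == ord0)%:R else (t != ord0)%:R).
rewrite (eq_bigr (fun p => (tg p == i)%:R * G (tg p))); last by move=> p _; rewrite /G; ring.
rewrite sum_t_delta /G; ring.
Qed.

Lemma M1_U2 : U2 = M1 *m U2 *m Q2.
Proof.
apply/matrixP => p a; rewrite mul_mx_diag /M1 mulmxBl -mulmxA V1U2 mul_diag_mx !mxE.

under eq_bigr do rewrite !mxE.
rewrite (sum_delta (tg p) (fun i => (i != ord0)%:R * (d2 * s2) * (s i)%:R *
   (if a == 0 then (i == ord0)%:R else (i != ord0)%:R))).
rewrite /gg /q; move: (tg p) => t.
have [-> | Ht] := eqVneq t ord0.
  rewrite /dd eqxx /=; case: (a == 0) => /=; rewrite ?mulr1n ?mulr0n.
    by rewrite !mul0r subr0 mulr1 mulfV //; exact: (q_neq0 ord0).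
  by rewrite !mul0r !mulr0 subr0 mul0r.
rewrite /dd (negbTE Ht) /= sizesN //; case: (a == 0) => /=; rewrite ?mulr1n ?mulr0n.
  by rewrite !mulr0 subr0 mul0r.
have h := xbb_neq0; rewrite /bb mE in h *.
by rewrite !mulr1 !mul1r; field.
Qed.

Definition FF (a a' : 'I_2) (bo : bool) : R :=
  (if a == 0 then d1 * s2 * bo%:R + cc * (~~ bo)%:R else cc * bo%:R) *
  ((if a' == 0 then bo%:R else (~~ bo)%:R) * gg a').

Lemma V2UQ a a' : (V2 *m (U2 *m Q2)) a a' =
  l%:R * FF a a' true + (k1 * m)%:R * FF a a' false.
Proof.
rewrite mul_mx_diag !mxE; under eq_bigr do rewrite !mxE.
exact: (sum_tb (FF a a')).
Qed.

Lemma detM2 : \det (1%:M - V2 *m (U2 *m Q2)) =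
  (1 - l%:R * (d1 * s2) / q ord0) - (k1 * m)%:R * l%:R * cc ^+ 2 / (q ord0 * (x - bb)).
Proof.
have HX := V2UQ; set X := V2 *m (U2 *m Q2) in HX *; clearbody X.
rewrite det2 !mxE !HX /FF /gg /=.
have h1 := q_neq0 ord0; have h2 := xbb_neq0.
by field; rewrite h1 h2.
Qed.

Lemma det_x : \det (x%:M - sombor_mx R e) =
  q ord0 ^+ l * q1 ^+ (k1 * m) * (1 - d2 * s2 * m%:R / q1) ^+ k1 *
  ((1 - l%:R * (d1 * s2) / q ord0) - (k1 * m)%:R * l%:R * cc ^+ 2 / (q ord0 * (x - bb))).
Proof.
by rewrite M0E -/M1 (det_lowrank _ M1_unit M1_U2) detM1 detM2.
Qed.
End Eval.
End Real.
End Comb.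

Unset Implicit Arguments. Set Strict Implicit.

Theorem corollary3p6 (R : realType) (k l m : nat)
  (hk : (2 <= k)%N) (hl : (1 <= l)%N) (hm : (1 <= m)%N) :
  let n := (l + (k - 1) * m)%N in
  let d1 : R := (n - 1)%N%:R in
  let d2 : R := (l + m - 1)%N%:R in
  let s2 : R := Num.sqrt 2 in
  let a : R := (l - 1)%N%:R * d1 * s2 in
  let b : R := (m - 1)%N%:R * d2 * s2 in
  let D : R := Num.sqrt ((a - b) ^+ 2
                 + 4 * l%:R * m%:R * (k - 1)%N%:R * (d1 ^+ 2 + d2 ^+ 2)) in
  let y1 : R := (a + b + D) / 2 in
  let y2 : R := (a + b - D) / 2 in
  char_poly (sombor_mx R (@star_join_rel k l m)) =
    ('X + (d1 * s2)%:P) ^+ (l - 1)%N%N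
    * ('X + (d2 * s2)%:P) ^+ ((m - 1) * (k - 1))%N
    * ('X - ((m - 1)%N%:R * d2 * s2)%:P) ^+ (k - 2)%N
    * ('X - y1%:P) * ('X - y2%:P).
Proof.
case: k hk => [|[|k2]] // _; case: l hl => // l' _; case: m hm => // m' _.
move=> n d1' d2' s2' a b D y1 y2.
apply: (poly_eq_from (c := bb l'.+1 m'.+1 R)) => x hx.
rewrite horner_char !hornerE (det_x _ (ltn0Sn l') (ltn0Sn m') hx).
have Hc : cc k2.+1 l'.+1 m'.+1 R ^+ 2 = d1 k2.+1 l'.+1 m'.+1 R ^+ 2 + d2 l'.+1 m'.+1 R ^+ 2.
  by rewrite sqr_sqrtr // addr_ge0 // sqr_ge0.
have HD : D ^+ 2 = (a - b) ^+ 2 + 4 * l'.+1%:R * m'.+1%:R * (k2.+1)%:R * (d1' ^+ 2 + d2' ^+ 2).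
  rewrite sqr_sqrtr // addr_ge0 ?sqr_ge0 // !mulr_ge0 ?ler0n ?addr_ge0 ?sqr_ge0 //.
have Hy : (x - y1) * (x - y2) = x ^+ 2 - (a + b) * x + ((a + b) ^+ 2 - D ^+ 2) / 4.
  by rewrite /y1 /y2; field.
rewrite -[in RHS]mulrA Hy HD Hc (one_minus (ltn0Sn m') hx) expr_div_n.
subst y1 y2 D a b d1' d2' s2' n.
rewrite /q /q1 /dd eqxx /bb /d1 /d2 /s2.
have e1 : (k2.+2 - 1 = k2.+1)%N by lia.
have e2 : (k2.+2 - 2 = k2)%N by lia.
have e3 : (l'.+1 - 1 = l')%N by lia.
have e4 : (m'.+1 - 1 = m')%N by lia.
rewrite e1 e2 e3 e4.
have hS := s2_ge0 R; rewrite /s2 in hS.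
have q0p := @q_gt0 k2.+1 _ _ _ _ hx ord0; rewrite /q /dd eqxx /d1 /s2 in q0p.
have q1p := q1_gt0 hx; rewrite /q1 /d2 /s2 in q1p.
have xbp := xbb_gt0 hx; rewrite /bb /d2 /s2 in xbp.
set S := Num.sqrt 2 in hS q0p q1p xbp *.
set A := (l'.+1 + k2.+1 * m'.+1 - 1)%:R in q0p *.
set B := (l'.+1 + m'.+1 - 1)%:R in q1p xbp *.
rewrite exprS mulnS exprD [(m' * _)%N]mulnC exprS.
rewrite [_ ^+ k2.+1]exprS -mulnS natrM.
have h1 : x + A * S != 0 by rewrite gt_eqF.
have h2 : x + B * S != 0 by rewrite gt_eqF.
have h4 : (x + B * S) ^+ k2 != 0 by rewrite expf_neq0.
set P := (x + A * S) ^+ l'.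
set Q := (x + B * S) ^+ (k2.+1 * m').
set Qk := (x + B * S) ^+ k2.
set E := (x - m'%:R * B * S) ^+ k2.
rewrite -!(addn1 l') -!(addn1 m') -!(addn1 k2) !natrD.
field.
by rewrite e4 in xbp; rewrite (gt_eqF xbp) (gt_eqF q0p) (gt_eqF q1p) /Qk expf_neq0 // (gt_eqF q1p).
Qed.
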